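(* Let $G=(V,E)$ be an undirected graph (not necessarily locally finite), let $X\subset V$ with $\mathrm{width}(X)<+\infty$, let $f:X\to\mathbb{R}$ with $f\ge 0$, and let $u,v:V\to\mathbb{R}$ satisfy $v\ge -C$ and $u\le C$ on $V$ for some constant $C>0$. Suppose that \[ -\Delta_\infty v(x)\ \ge\ f(x)\ \ge\ -\Delta_\infty u(x)\qquad\text{for all } x\in X. \] Then $\sup_{V}(u-v)=\sup_{V\setminus X}(u-v)$.
   Context: For $x,y\in V$ write $x\sim y$ if $\{x,y\}\in E$. The combinatorial distance $d(A,B)$ between subsets $A,B\subset V$ is the infimum of the lengths $n$ of paths $A\ni x_0\sim x_1\sim\cdots\sim x_n\in B$ (and $d(A,x)=d(A,\{x\})$). The boundary of $X$ is $\partial X=\{y\notin X:\ y\sim x \text{ for some } x\in X\}$, and $\mathrm{width}(X)=\sup_{x\in X} d(\partial X,x)$. For $w:V\to\mathbb{R}$ the discrete infinity Laplacian is $\Delta_\infty w(x)=\inf_{y\sim x}w(y)+\sup_{y\sim x}w(y)-2w(x)$ (infima and suprema taken in the extended reals). *)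

(* Defs.v *)
From HB Require Import structures.
From mathcomp Require Import all_boot all_order all_algebra.
From mathcomp Require Import all_classical all_reals.
From mathcomp Require Import ereal.
Set Implicit Arguments. Unset Strict Implicit. Unset Printing Implicit Defensive.
Import Order.TTheory GRing.Theory Num.Theory.
Local Open Scope classical_set_scope.
Local Open Scope ring_scope.

Section GraphDefs.
Variables (R : realType) (V : Type).
Variable adj : V -> V -> Prop.

Definition walk (A B : set V) (n : nat) : Prop :=
  exists p : nat -> V, A (p 0%N) /\ B (p n) /\ (forall i, (i < n)%N -> adj (p i) (p i.+1)).

Definition gdist (A B : set V) : \bar R :=
  ereal_inf [set ((n%:R : R)%:E) | n in walk A B].

Definition boundary (X : set V) : set V :=
  [set y | ~ X y /\ exists x, X x /\ adj y x].

Definition width (X : set V) : \bar R :=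
  ereal_sup [set gdist (boundary X) [set x] | x in X].

Definition inf_lap (w : V -> R) (x : V) : \bar R :=
  (ereal_inf [set (w y)%:E | y in adj x] + ereal_sup [set (w y)%:E | y in adj x]
   - (2 * w x)%:E)%E.
End GraphDefs.

(* Main.v *)
Require Import Defs.
From HB Require Import structures.
From mathcomp Require Import all_boot all_order all_algebra.
From mathcomp Require Import all_classical all_reals.
From mathcomp Require Import ereal.
From mathcomp Require Import ring lra.
Import Order.TTheory GRing.Theory Num.Theory.
Local Open Scope classical_set_scope.
Local Open Scope ring_scope.

Definition hh {R : realType} (s : R) := s / (s + 1).

Lemma hh_ge0 (R : realType) (s : R) : 0 <= s -> 0 <= hh s.
Proof. move=> s0; rewrite /hh divr_ge0 //; lra. Qed.

Lemma hh_le1 (R : realType) (s : R) : 0 <= s -> hh s <= 1.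
Proof. move=> s0; rewrite /hh ler_pdivrMr; lra. Qed.

Lemma hh_diff (R : realType) (s t : R) : 0 <= s -> 0 <= t ->
  hh t - hh s = (t - s) / ((s + 1) * (t + 1)).
Proof. move=> s0 t0; rewrite /hh; field; apply/andP; split; lra. Qed.

Lemma hh_mono (R : realType) (s t : R) : 0 <= s -> s <= t -> hh s <= hh t.
Proof.
move=> s0 st; rewrite -subr_ge0 hh_diff //; last lra.
rewrite divr_ge0 //; first lra. rewrite mulr_ge0 //; lra.
Qed.

Lemma hh_lip (R : realType) (s t : R) : 0 <= s -> s <= t -> hh t - hh s <= t - s.
Proof.
move=> s0 st; rewrite hh_diff //; last lra.
rewrite ler_pdivrMr; last by rewrite mulr_gt0 //; lra.
have h1 : 1 <= (s + 1) * (t + 1) by nra.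
nra.
Qed.

Lemma hh_second (R : realType) (s p A : R) : 0 <= p -> p <= s -> s + 1 <= A ->
  p ^+ 2 <= A ^+ 3 * (2 * hh s - hh (s - p) - hh (s + p)).
Proof.
move=> p0 ps sA.
have e : 2 * hh s - hh (s - p) - hh (s + p) =
   2 * p ^+ 2 / ((s + 1) * (s - p + 1) * (s + p + 1)).
  rewrite /hh; field; apply/and3P; split; apply/eqP; lra.
rewrite e.
have a0 : 0 < s + 1 by lra.
have b0 : 0 < s - p + 1 by lra.
have c0 : 0 < s + p + 1 by lra.
have d0 : 0 < (s + 1) * (s - p + 1) * (s + p + 1) by rewrite !mulr_gt0.
rewrite mulrA ler_pdivlMr //.
have hd : (s + 1) * (s - p + 1) * (s + p + 1) <= 2 * A ^+ 3.
  have h1 : (s + 1) * (s - p + 1) <= A * A.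
    apply: ler_pM; lra.
  have h2 : (s + 1) * (s - p + 1) * (s + p + 1) <= A * A * (2 * A).
    apply: ler_pM; try lra. by rewrite mulr_ge0 //; lra.
  by rewrite exprS expr2 ; lra.
have p2 : 0 <= p ^+ 2 by rewrite exprn_ge0.
nra.
Qed.

Lemma sup_props (R : realType) (T : Type) (P : set T) (g : T -> R) (r : R) :
  ereal_sup [set (g y)%:E | y in P] = r%:E ->
  (forall y, P y -> g y <= r) /\
  (forall d, 0 < d -> exists y, P y /\ r - d < g y).
Proof.
move=> hS; split.
  move=> y Py; rewrite -lee_fin -hS; apply: ereal_sup_ubound; by exists y.
move=> d d0.
have hf : ereal_sup [set (g y)%:E | y in P] \is a fin_num by rewrite hS.
have [z [y Py <-]] := ub_ereal_sup_adherent d0 hf.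
by rewrite hS -EFinB lte_fin => h; exists y.
Qed.

Lemma inf_props (R : realType) (T : Type) (P : set T) (g : T -> R) (r : R) :
  ereal_inf [set (g y)%:E | y in P] = r%:E ->
  (forall y, P y -> r <= g y) /\
  (forall d, 0 < d -> exists y, P y /\ g y < r + d).
Proof.
move=> hS; split.
  move=> y Py; rewrite -lee_fin -hS; apply: ereal_inf_lbound; by exists y.
move=> d d0.
have hf : ereal_inf [set (g y)%:E | y in P] \is a fin_num by rewrite hS.
have [z [y Py <-]] := lb_ereal_inf_adherent d0 hf.
by rewrite hS -EFinD lte_fin => h; exists y.
Qed.

Arguments inf_props {R T P g r}.
Arguments sup_props {R T P g r}.

Section Local.
Variables (R : realType) (V : Type) (adj : V -> V -> Prop) (X : set V)
  (f u v : V -> R) (C : R)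
  (hv : forall x, - C <= v x) (hu : forall x, u x <= C)
  (hv_super : forall x, X x -> ((f x)%:E <= - inf_lap adj v x)%E)
  (hu_sub : forall x, X x -> (- inf_lap adj u x <= (f x)%:E)%E).

Lemma local_u x y0 : X x -> adj x y0 ->
  exists iu su : R, (forall y, adj x y -> iu <= u y /\ u y <= su) /\
   (forall d, 0 < d -> exists y, adj x y /\ su - d < u y) /\
   2 * u x - iu - su <= f x.
Proof.
move=> Xx a0.
have Sub : (ereal_sup [set (u y)%:E | y in adj x] <= C%:E)%E.
  apply: ge_ereal_sup => _ [y _ <-]; by rewrite lee_fin.
have Slb : ((u y0)%:E <= ereal_sup [set (u y)%:E | y in adj x])%E.
  by apply: ereal_sup_ubound; exists y0.
have Ilb : (ereal_inf [set (u y)%:E | y in adj x] <= (u y0)%:E)%E.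
  by apply: ereal_inf_lbound; exists y0.
have H := hu_sub x Xx; rewrite /inf_lap in H.
case Es : (ereal_sup [set (u y)%:E | y in adj x]) Sub Slb H => [su| |] Sub Slb H.
2: by [].
2: by rewrite leeNy_eq in Slb.
case Ei : (ereal_inf [set (u y)%:E | y in adj x]) Ilb H => [iu| |] Ilb H.
2: by [].
2: by [].
have [Hi1 Hi2] := inf_props Ei.
have [Hs1 Hs2] := sup_props Es.
exists iu, su; split; first by move=> y ay; split; [apply: Hi1|apply: Hs1].
split; first exact: Hs2.
move: H; rewrite -!EFinD -EFinN lee_fin; lra.
Qed.

Lemma local_v x y0 : X x -> adj x y0 ->
  exists iv sv : R, (forall y, adj x y -> iv <= v y /\ v y <= sv) /\
   (forall d, 0 < d -> exists y, adj x y /\ v y < iv + d) /\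
   f x <= 2 * v x - iv - sv.
Proof.
move=> Xx a0.
have Ilb : ((- C)%:E <= ereal_inf [set (v y)%:E | y in adj x])%E.
  apply: le_ereal_inf_tmp => _ [y _ <-]; by rewrite lee_fin.
have Slb : ((v y0)%:E <= ereal_sup [set (v y)%:E | y in adj x])%E.
  by apply: ereal_sup_ubound; exists y0.
have Iub : (ereal_inf [set (v y)%:E | y in adj x] <= (v y0)%:E)%E.
  by apply: ereal_inf_lbound; exists y0.
have H := hv_super x Xx; rewrite /inf_lap in H.
case Ei : (ereal_inf [set (v y)%:E | y in adj x]) Ilb Iub H => [iv| |] Ilb Iub H.
2: by [].
2: by [].
case Es : (ereal_sup [set (v y)%:E | y in adj x]) Slb H => [sv| |] Slb H.
2: by [].
2: by [].
have [Hi1 Hi2] := inf_props Ei.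
have [Hs1 Hs2] := sup_props Es.
exists iv, sv; split; first by move=> y ay; split; [apply: Hi1|apply: Hs1].
split; first exact: Hi2.
move: H; rewrite -!EFinD -EFinN lee_fin; lra.
Qed.

Variables (adj_sym : forall x y, adj x y -> adj y x)
  (hf : forall x, X x -> 0 <= f x).
Section Eps.
Variables (eps : R) (eps0 : 0 < eps) (eps1 : eps <= 1).

Definition GG (t : R) := t + eps * hh (t + C).
Definition WW (x : V) := u x - GG (v x).

Lemma GG_mono {t1 t2 : R} : - C <= t1 -> t1 <= t2 -> GG t1 <= GG t2.
Proof.
move=> h1 h2; rewrite /GG.
have H : hh (t1 + C) <= hh (t2 + C) by apply: hh_mono; lra.
have := ler_wpM2l (ltW eps0) H; lra.
Qed.

Lemma GG_lip {t1 t2 : R} : - C <= t1 -> t1 <= t2 -> GG t2 - GG t1 <= (1 + eps) * (t2 - t1).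
Proof.
move=> h1 h2; rewrite /GG.
have H : hh (t2 + C) - hh (t1 + C) <= (t2 + C) - (t1 + C) by apply: hh_lip; lra.
have := ler_wpM2l (ltW eps0) H; lra.
Qed.

Lemma GG_ge {t : R} : - C <= t -> t <= GG t.
Proof.
move=> h; rewrite /GG; have H : 0 <= hh (t + C) by apply: hh_ge0; lra.
have := mulr_ge0 (ltW eps0) H; lra.
Qed.

Lemma GG_le {t : R} : - C <= t -> GG t <= t + eps.
Proof.
move=> h; rewrite /GG; have H : hh (t + C) <= 1 by apply: hh_le1; lra.
have := ler_wpM2l (ltW eps0) H; lra.
Qed.

Section Mx.
Variables (M : R) (hM : forall y, WW y <= M).

Lemma step (eta : R) : 0 < eta -> exists rho, 0 < rho /\ rho <= eta /\
  forall x, X x -> M - rho <= WW x -> forall y, adj x y -> M - eta <= WW y.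
Proof.
move=> eta0.
set A0 := Num.max (2 * C + 2 - M) 1.
have A01 : 1 <= A0 by rewrite le_max lexx orbT.
have A0M : 2 * C + 2 - M <= A0 by rewrite le_max lexx.
have A03 : 0 < A0 ^+ 3 by rewrite exprn_gt0 //; lra.
set K := eps * (eta / 8) ^+ 2 / (2 * A0 ^+ 3).
have K0 : 0 < K by rewrite /K divr_gt0 ?mulr_gt0 ?exprn_gt0 //; lra.
set rho := Num.min (Num.min (eta / 4) 1) K.
have rho1 : rho <= eta / 4 by rewrite /rho !ge_min lexx.
have rho2 : rho <= 1 by rewrite /rho !ge_min lexx orbT.
have rho3 : rho <= K by rewrite /rho ge_min lexx orbT.
have rho0 : 0 < rho by rewrite /rho !lt_min K0 andbT; apply/andP; split; lra.
exists rho; split=> //; split; first lra.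
move=> x Xx Wx y axy.
have [iu [su [Hu1 [Hu2 Hu3]]]] := local_u x y Xx axy.
have [iv [sv [Hv1 [Hv2 Hv3]]]] := local_v x y Xx axy.
have fx0 := hf x Xx.
have Mx := hM x.
have [iuy suy] := Hu1 y axy.
have [ivy svy] := Hv1 y axy.
have ivC : - C <= iv.
  apply/ler_addgt0Pr => d d0; have [z [_ hz]] := Hv2 d d0; have := hv z; lra.
have hA : su - u x <= GG sv - GG (v x) + (M - WW x).
  apply/ler_addgt0Pr => d d0; have [z [az hz]] := Hu2 d d0.
  have := hM z; rewrite /WW => hz2.
  have := GG_mono (hv z) (proj2 (Hv1 z az)).
  move: Mx; rewrite /WW; lra.
have hB : iu - u x <= GG iv - GG (v x) + (M - WW x).
  apply/ler_addgt0Pr => e e0.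
  have d0 : 0 < e / (1 + eps) by rewrite divr_gt0 // addr_gt0.
  have e1 : (1 + eps) * (e / (1 + eps)) = e.
    by field; rewrite lt0r_neq0 // addr_gt0.
  move: d0 e1; set d := e / (1 + eps) => d0 e1.
  have [z [az hz]] := Hv2 _ d0.
  have := hM z; rewrite /WW => hz2.
  have g1 := GG_mono (hv z) (ltW hz).
  have g2 := GG_lip ivC (ler_wpDr (ltW d0) (lexx iv)).
  have := (proj1 (Hu1 z az)).
  have hd : iv + d - iv = d by rewrite addrAC subrr add0r.
  move: Mx g2; rewrite /WW hd; lra.
have hWx : WW x = u x - GG (v x) by [].
have hWy : WW y = u y - GG (v y) by [].
have hq : sv - v x <= v x - iv by lra.
have hp0 : 0 <= v x - iv by lra.
have hps : v x - iv <= v x + C by lra.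
have hsA : v x + C + 1 <= A0.
  have := GG_ge (hv x); have := hu x; lra.
have hstar : eps * (2 * hh (v x + C) - hh (iv + C) - hh (sv + C)) <= 2 * (M - WW x).
  move: hA hB; rewrite /GG; lra.
have hmono : hh (sv + C) <= hh (v x + C + (v x - iv)).
  apply: hh_mono; have := hv y; lra.
have hsec := @hh_second R _ _ _ hp0 hps hsA.
have e2 : v x + C - (v x - iv) = iv + C by ring.
rewrite e2 in hsec.
set D := 2 * hh (v x + C) - hh (iv + C) - hh (v x + C + (v x - iv)).
have hD : eps * D <= 2 * (M - WW x).
  have := ler_wpM2l (ltW eps0) hmono; rewrite /D; lra.
have hA3 : 0 <= A0 ^+ 3 by apply: ltW.
have h1 := ler_wpM2l hA3 hD.
have h2 := ler_wpM2l (ltW eps0) hsec.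
have eK : K * (2 * A0 ^+ 3) = eps * (eta / 8) ^+ 2.
  by rewrite /K; field; rewrite gt_eqF //; apply: lt_le_trans A01.
have h3 : A0 ^+ 3 * (2 * (M - WW x)) <= K * (2 * A0 ^+ 3).
  have : M - WW x <= K by lra.
  move=> hk; have := ler_wpM2l hA3 hk; lra.
have h4 : eps * (v x - iv) ^+ 2 <= eps * (eta / 8) ^+ 2.
  rewrite -eK; apply: (le_trans h2); rewrite mulrCA; exact: (le_trans h1 h3).
have h5 : (v x - iv) ^+ 2 <= (eta / 8) ^+ 2 by rewrite -(ler_pM2l eps0).
have hp8 : v x - iv <= eta / 8.
  move: h5; rewrite !expr2 => h5; nra.
have F1 : iu - GG sv <= WW y.
  have := GG_mono (hv y) svy; rewrite hWy; lra.
have F2 : GG sv - GG (v x) <= sv - v x + eps * (v x - iv).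
  have hl := @hh_lip R (v x + C) (v x + C + (v x - iv)).
  have hvC := hv x.
  have : hh (v x + C + (v x - iv)) - hh (v x + C) <= v x + C + (v x - iv) - (v x + C).
    by apply: hl; lra.
  move=> hl2.
  have : hh (sv + C) - hh (v x + C) <= v x - iv by lra.
  move=> /(ler_wpM2l (ltW eps0)); rewrite /GG; lra.
have F3 : eps * (v x - iv) <= v x - iv.
  by have := ler_wpM2r hp0 eps1; rewrite mul1r.
lra.
Qed.

Lemma path_lemma (n : nat) : forall eta : R, 0 < eta -> exists rho, 0 < rho /\ rho <= eta /\
  forall x, M - rho <= WW x ->
  (exists k, (k <= n)%N /\ walk adj (boundary adj X) [set x] k) ->
  exists z, ~ X z /\ M - eta <= WW z.
Proof.
elim: n => [|n IH] eta eta0.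
  exists eta; split=> //; split=> // x Wx [k [hk [p [p0 [pk _]]]]].
  move: hk; rewrite leqn0 => /eqP hk; subst k.
  exists x; split=> //; rewrite -pk; exact: p0.1.
have [rho' [rho'0 [rho'e H']]] := IH eta eta0.
have [rho [rho0 [rhoe Hs]]] := step rho' rho'0.
exists rho; split=> //; split; first exact: le_trans rhoe rho'e.
move=> x Wx [k [hk [p [p0 [pk pa]]]]].
have [Xx|nXx] := pselect (X x); last first.
  exists x; split=> //; apply: le_trans Wx; rewrite lerD2l lerN2.
  exact: le_trans rhoe rho'e.
case: k hk pk pa => [|k] hk pk pa.
  by exfalso; move: p0 => [+ _]; rewrite pk.
have axy : adj x (p k) by apply: adj_sym; rewrite -pk; apply: pa.
apply: (H' (p k)); first exact: Hs Xx Wx _ axy.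
exists k; split=> //; exists p; split=> //; split=> // i hi.
by apply: pa; apply: ltn_trans hi _.
Qed.
End Mx.
End Eps.

Lemma final (N : nat)
  (hN : forall x, X x -> exists k, (k <= N)%N /\ walk adj (boundary adj X) [set x] k)
  x (e : R) : 0 < e -> exists z, ~ X z /\ u x - v x - e <= u z - v z.
Proof.
move=> e0.
set eps := Num.min (e / 2) 1.
have eps0 : 0 < eps by rewrite lt_min ltr01 andbT divr_gt0.
have eps1 : eps <= 1 by rewrite ge_min lexx orbT.
have epse : eps <= e / 2 by rewrite ge_min lexx.
set S := [set WW eps y | y in [set: V]].
have hS : has_sup S.
  split; first by exists (WW eps x), x.
  exists (C + C) => _ [y _ <-].
  have := GG_ge eps eps0 (hv y); have := hu y; have := hv y; rewrite /WW; lra.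
set M := sup S.
have hM : forall y, WW eps y <= M.
  by move=> y; apply: sup_upper_bound => //; exists y.
have e20 : 0 < e / 2 by rewrite divr_gt0.
have [rho [rho0 [rhoe Hp]]] := @path_lemma eps eps0 eps1 M hM N _ e20.
have [_ [x0 _ <-] hx0] := sup_adherent rho0 hS.
have [z [nXz Wz]] : exists z, ~ X z /\ M - e / 2 <= WW eps z.
  have [Xx0|nXx0] := pselect (X x0); last first.
    by exists x0; split=> //; rewrite -/M in hx0; lra.
  apply: Hp; first by rewrite -/M in hx0; lra.
  exact: hN.
exists z; split=> //.
have := GG_ge eps eps0 (hv z); have := GG_le eps eps0 (hv x); have := hM x.
move: Wz; rewrite /WW; lra.
Qed.
End Local.

Theorem theorem1p2 (R : realType) (V : Type) (adj : V -> V -> Prop)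
  (adj_sym : forall x y, adj x y -> adj y x)
  (adj_irr : forall x, ~ adj x x)
  (X : set V) (hwidth : (width R adj X < +oo)%E)
  (f : V -> R) (hf : forall x, X x -> 0 <= f x)
  (u v : V -> R) (C : R) (hC : 0 < C)
  (hv : forall x, - C <= v x) (hu : forall x, u x <= C)
  (hv_super : forall x, X x -> ((f x)%:E <= - inf_lap adj v x)%E)
  (hu_sub : forall x, X x -> (- inf_lap adj u x <= (f x)%:E)%E) :
  ereal_sup [set (u x - v x)%:E | x in [set: V]] =
  ereal_sup [set (u x - v x)%:E | x in ~` X].
Proof.
have [B hB] : exists B : R, forall x, X x ->
    (gdist R adj (boundary adj X) [set x] < B%:E)%E.
  have hle : forall x, X x -> (gdist R adj (boundary adj X) [set x] <= width R adj X)%E.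
    by move=> x Xx; apply: ereal_sup_ubound; exists x.
  move: hwidth hle; case: (width R adj X) => [r| |] // _ hle.
    exists (r + 1) => x Xx; apply: le_lt_trans (hle x Xx) _.
    by rewrite lte_fin ltrDl ltr01.
  exists 0 => x Xx; apply: le_lt_trans (hle x Xx) _; exact: ltNyr.
set N := Num.bound (Num.max B 0).
have hN : forall x, X x -> exists k, (k <= N)%N /\ walk adj (boundary adj X) [set x] k.
  move=> x Xx; have [_ [k hk <-]] := ereal_inf_lt (hB x Xx).
  rewrite lte_fin => hkB; exists k; split=> //.
  have hm0 : (0 : R) <= Num.max B 0 by rewrite le_max lexx orbT.
  have h1 := archi_boundP hm0.
  have h2 : (k%:R : R) < (N%:R : R).
    have hBm : B <= Num.max B 0 by rewrite le_max lexx.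
    exact: lt_trans (lt_le_trans hkB hBm) h1.
  by apply: ltnW; rewrite -(ltr_nat R).
apply/eqP; rewrite eq_le; apply/andP; split; last first.
  by apply: ereal_sup_le => _ [x hx <-]; exists x.
apply: ge_ereal_sup => _ [x _ <-].
apply/lee_subgt0Pr => e e0.
have [z [nXz hz]] := @final R V adj X f u v C hv hu hv_super hu_sub adj_sym hf N hN x e e0.
apply: le_trans (ereal_sup_ubound _); last by exists z.
by rewrite -EFinB lee_fin.
Qed.
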